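(* Let $\mathcal{RR}_2$ be the set of partitions in which consecutive parts differ by at least $2$ and all parts are greater than $1$ (including the empty partition). For a nonempty partition $\pi=(\lambda_1,\dots,\lambda_\nu)$ let $\omega_{2,2}(\pi)=(\lambda_\nu-1)\prod_{i=1}^{\nu-1}(\lambda_i-\lambda_{i+1}-1)$, and let $\omega_{2,2}$ of the empty partition be $1$. Then, as formal power series, \[\sum_{\pi\in\mathcal{RR}_2}\omega_{2,2}(\pi)\,q^{|\pi|}=\sum_{\pi\in\tilde C_{\ge 0}}q^{|\pi|},\] where $\tilde C_{\ge0}$ is the set of all partitions with crank $\ge 0$.
   Context: A partition is a finite weakly decreasing sequence of positive integers; $|\pi|$ is the sum of its parts. The crank of a partition $\pi$ is defined as: the largest part of $\pi$ if $1$ is not a part of $\pi$ (the empty partition has crank $0$); otherwise, (the number of parts of $\pi$ larger than the number of $1$'s in $\pi$) minus (the number of $1$'s in $\pi$). *)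

(* Defs.v *)
From mathcomp Require Import all_boot all_order all_algebra ssrint.
Set Implicit Arguments. Unset Strict Implicit. Unset Printing Implicit Defensive.
Import GRing.Theory Num.Theory.

Definition is_partition (s : seq nat) : bool :=
  sorted (fun a b => b <= a) s && all (fun x => 0 < x) s.

Definition psize (s : seq nat) : nat := sumn s.

Definition ones (s : seq nat) : nat := count (fun x => x == 1) s.

(* crank, as in the paper; for a partition the head is the largest part,
   and head 0 [::] = 0 gives crank 0 for the empty partition *)
Definition crank (s : seq nat) : int :=
  if ones s == 0 then Posz (head 0 s)
  else (Posz (count (fun x => (ones s < x)%N) s) - Posz (ones s))%R.

Definition RR2 (s : seq nat) : bool :=
  sorted (fun a b => b + 2 <= a) s && all (fun x => 1 < x) s.

(* omega_{2,2}; on RR_2 all factors are >= 1, so truncated nat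
   subtraction agrees with the integer formula *)
Fixpoint omega22 (s : seq nat) : nat :=
  match s with
  | [::] => 1
  | [:: x] => x - 1
  | x :: ((y :: _) as t) => (x - y - 1) * omega22 t
  end.

(* Main.v *)
Require Import Defs.
From mathcomp Require Import all_boot all_order all_algebra ssrint.
From mathcomp Require Import zify.
Import GRing.Theory Num.Theory.
Set Implicit Arguments. Unset Strict Implicit. Unset Printing Implicit Defensive.

Notation R := (fun a b : nat => b <= a).

Ltac flia :=
  repeat match goal with x := ?b |- _ =>
    lazymatch b with
    | context [divn] => clearbody x
    | context [modn] => clearbody x
    | _ => let E := fresh "E" in have E : x = b by []; clearbody x
    end end;
  repeat match goal with
   | H : is_true (all _ _) |- _ => clear H
   | H : is_true (sorted _ _) |- _ => clear H
   | H : is_true (is_partition _) |- _ => clear H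
   | H : @eq (seq _) _ _ |- _ => clear H
   | H : forall _, _ |- _ => clear H
  end; lia.

Lemma R_trans : transitive R.
Proof. move=> y x z /= h1 h2; exact: leq_trans h2 h1. Qed.

Lemma srt_cons x t : sorted R (x :: t) = all (fun b => b <= x) t && sorted R t.
Proof. by rewrite /= path_sortedE //; exact: R_trans. Qed.

Lemma srt_cat a b : sorted R a -> sorted R b ->
  (forall x y, x \in a -> y \in b -> y <= x) -> sorted R (a ++ b).
Proof.
elim: a => [//|x a IH] /=; rewrite -/(sorted R (x :: a)) srt_cons.
move=> /andP[ha sa] sb H; rewrite -/(sorted R (x :: (a ++ b))) srt_cons.
rewrite all_cat ha /=; apply/andP; split.
- apply/allP=> y yb; apply: H => //; exact: mem_head.
- apply: IH => // u v ua vb; apply: H => //; by rewrite inE ua orbT.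
Qed.

Lemma part_cons x t : is_partition (x :: t) =
  [&& all (fun b => b <= x) t, is_partition t & 0 < x].
Proof.
rewrite /is_partition srt_cons /=.
by case: (all _ t); case: (sorted _ t); case: (0 < x); case: (all _ t).
Qed.

Fixpoint Dk k s := if s is x :: t then (if k.+1 < x then (Dk k.+1 t).+1 else 0) else 0.
Definition D s := Dk 0 s.

Lemma Dk_cat k a b : all (fun x => k + size a < x) a ->
  all (fun x => x <= (k + size a).+1) b -> Dk k (a ++ b) = size a.
Proof.
elim: a k => [|x a IH] k /=.
  case: b => [//|y b] _ /= /andP[hy _]; rewrite addn0 in hy.
  by rewrite ltnNge hy.
move=> /andP[hx ha] hb.
have -> : k.+1 < x by move: hx; flia.
rewrite IH //; first by rewrite addSnnS.
by rewrite addSnnS.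
Qed.

Lemma Dk_dec k s : sorted R s ->
  [/\ Dk k s <= size s, all (fun x => k + Dk k s < x) (take (Dk k s) s)
    & all (fun x => x <= (k + Dk k s).+1) (drop (Dk k s) s)].
Proof.
elim: s k => [|x t IH] k //=.
rewrite -/(sorted R (x :: t)) srt_cons => /andP[hxt st].
case: ifP => hk.
- have [h1 h2 h3] := IH k.+1 st.
  rewrite /= !addnS -!addSn; split => //; rewrite h2 andbT.
  move: h2; case E: (Dk k.+1 t) => [|d]; first by move=> _; rewrite addn0; exact: hk.
  case: t hxt {IH st h1 h3} E => [//|y t] /= /andP[hy _] E /andP[hy' _]; flia.
- split => //=; rewrite addn0 leqNgt hk /=.
  apply/allP=> y yt; apply: leq_trans (allP hxt y yt) _.
  by rewrite leqNgt hk.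
Qed.

Lemma D_char s : sorted R s ->
  [/\ D s <= size s, all (fun x => D s < x) (take (D s) s)
    & all (fun x => x <= (D s).+1) (drop (D s) s)].
Proof. by move=> /(Dk_dec 0); rewrite /D add0n. Qed.

Lemma D_cat a b : all (fun x => size a < x) a ->
  all (fun x => x <= (size a).+1) b -> D (a ++ b) = size a.
Proof. by move=> ha hb; rewrite /D Dk_cat // add0n. Qed.

Definition T s := all (fun x => x <= D s) (drop (D s) s).

Lemma ones_top a : all (fun x => size a < x) a -> ones a = 0.
Proof.
case: a => [//|x a] h; apply/eqP; rewrite -leqn0 leqNgt -has_count.
apply/hasP => [[y ya /eqP ey]]; move: (allP h y ya); rewrite ey /=.
by rewrite ltnS leqn0.
Qed.

Lemma crank_dec a b : all (fun x => size a < x) a ->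
  all (fun x => x <= (size a).+1) b ->
  (0 <= crank (a ++ b))%R = (ones b <= size a).
Proof.
move=> ha hb; have eo : ones (a ++ b) = ones b.
  by rewrite /ones count_cat -/(ones a) ones_top.
rewrite /crank eo; case: ifP => [/eqP -> //|_].
rewrite subr_ge0 lez_nat count_cat.
have ca : forall o, o <= size a -> count (fun x => o < x) a = size a.
  move=> o ho; rewrite -[RHS]count_predT; apply: eq_in_count => x xa /=.
  by move: (allP ha x xa) => /=; flia.
apply/idP/idP => h.
- rewrite leqNgt; apply/negP => hlt.
  have cb : count (fun x => ones b < x) b = 0.
    apply/eqP; rewrite -leqn0 leqNgt -has_count; apply/hasP => [[y yb hy]].
    by move: (allP hb y yb) => /=; flia.
  move: h; rewrite cb addn0 => h.
  have := count_size (fun x => ones b < x) a; flia.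
- rewrite ca //; flia.
Qed.

Lemma count_bij (X Y : eqType) (L : seq X) (M : seq Y) (P : pred X)
  (f : X -> Y) (g : Y -> X) :
  uniq L -> uniq M ->
  (forall x, x \in L -> P x -> f x \in M /\ g (f x) = x) ->
  (forall y, y \in M -> [/\ g y \in L, P (g y) & f (g y) = y]) ->
  count P L = size M.
Proof.
move=> uL uM Hf Hg; rewrite -size_filter; apply/eqP; rewrite eqn_leq.
apply/andP; split.
- rewrite -(size_map f); apply: uniq_leq_size.
  + rewrite map_inj_in_uniq ?filter_uniq //.
    move=> x y; rewrite !mem_filter => /andP[px xL] /andP[py yL] e.
    by rewrite -(Hf x xL px).2 e (Hf y yL py).2.
  + move=> z /mapP[x]; rewrite mem_filter => /andP[px xL] ->.
    exact: (Hf x xL px).1.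
- rewrite -(size_map g); apply: uniq_leq_size.
  + rewrite map_inj_in_uniq //.
    move=> x y xM yM e.
    by have [_ _ <-] := Hg x xM; rewrite e; have [_ _ ->] := Hg y yM.
  + move=> z /mapP[y yM ->]; have [h1 h2 _] := Hg y yM.
    by rewrite mem_filter h1 h2.
Qed.

Lemma count_bij2 (X : eqType) (L : seq X) (P Q : pred X) (f g : X -> X) :
  uniq L ->
  (forall x, x \in L -> P x -> [/\ f x \in L, Q (f x) & g (f x) = x]) ->
  (forall y, y \in L -> Q y -> [/\ g y \in L, P (g y) & f (g y) = y]) ->
  count P L = count Q L.
Proof.
move=> uL Hf Hg; rewrite -(size_filter Q); apply: (@count_bij _ _ L [seq x <- L | Q x] P f g) => //.
- exact: filter_uniq.
- by move=> x xL px; have [h1 h2 h3] := Hf x xL px; rewrite mem_filter h1 h2.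
- by move=> y; rewrite mem_filter => /andP[qy yL]; exact: Hg.
Qed.

Lemma ones_split b : sorted R b -> all (fun x => 0 < x) b ->
  b = [seq x <- b | 1 < x] ++ nseq (ones b) 1.
Proof.
elim: b => [//|x t IH]; rewrite srt_cons /= => /andP[hxt st] /andP[px pt].
rewrite /ones /= -/(ones t); case: ltnP => hx.
- have nx : (x == 1) = false by apply/eqP; flia.
  by rewrite nx /= -IH.
- have ex : x = 1 by flia.
  have hf : [seq x <- t | 1 < x] = [::].
    apply/eqP; rewrite -[_ == _]negbK -has_filter; apply/hasP=> [[y yt hy]].
    by move: (allP hxt y yt); rewrite ex; flia.
  rewrite ex eqxx /= hf /=; congr (_ :: _).
  by rewrite {1}(IH st pt) hf.
Qed.

Lemma top_split b c : sorted R b -> all (fun x => x <= c) b ->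
  b = nseq (count (fun x => x == c) b) c ++ [seq x <- b | x < c].
Proof.
elim: b => [//|x t IH]; rewrite srt_cons /= => /andP[hxt st] /andP[xc tc].
case: eqP => [->|ne].
- by rewrite ltnn add1n /= -IH.
- have hx : x < c by flia.
  rewrite hx add0n /=.
  have hf : count (fun x => x == c) t = 0.
    apply/eqP; rewrite -leqn0 leqNgt -has_count; apply/hasP=> [[y yt /eqP hy]].
    by move: (allP hxt y yt); flia.
  by rewrite {1}(IH st tc) hf.
Qed.

Definition Phi s := let v := D s in let bot := drop v s in
  take v s ++ [seq x <- [seq y <- bot | y < v.+1] | 1 < x]
    ++ nseq (ones bot + v.+1 * count (fun x => x == v.+1) bot) 1.

Definition Psi s := let v := D s in let bot := drop v s in
  take v s ++ nseq (ones bot %/ v.+1) v.+1 ++ [seq x <- bot | 1 < x]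
    ++ nseq (ones bot %% v.+1) 1.

Section Dec.
Variables a b : seq nat.
Hypothesis ha : all (fun x => size a < x) a.
Hypothesis hb : all (fun x => x <= (size a).+1) b.

Lemma Phi_cat : Phi (a ++ b) = a ++ [seq x <- [seq y <- b | y < (size a).+1] | 1 < x]
    ++ nseq (ones b + (size a).+1 * count (fun x => x == (size a).+1) b) 1.
Proof. by rewrite /Phi D_cat // take_size_cat // drop_size_cat. Qed.

Lemma Psi_cat : Psi (a ++ b) = a ++ nseq (ones b %/ (size a).+1) (size a).+1
   ++ [seq x <- b | 1 < x] ++ nseq (ones b %% (size a).+1) 1.
Proof. by rewrite /Psi D_cat // take_size_cat // drop_size_cat. Qed.

Lemma T_cat : T (a ++ b) = all (fun x => x <= size a) b.
Proof. by rewrite /T D_cat // drop_size_cat. Qed.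
End Dec.

Lemma srt_piv a b m : sorted R a -> sorted R b ->
  (forall y, y \in b -> y <= m) -> (forall x, x \in a -> m <= x) ->
  sorted R (a ++ b).
Proof.
move=> sa sb hb ha; apply: srt_cat => // x y xa yb.
exact: leq_trans (hb y yb) (ha x xa).
Qed.

Lemma srt_nseq n x : sorted R (nseq n x).
Proof.
elim: n => [//|n IH]; rewrite /= -/(sorted R (x :: nseq n x)) srt_cons IH andbT.
by apply/allP => y /nseqP[-> _].
Qed.

Lemma ones0 s : all (fun x => 1 < x) s -> ones s = 0.
Proof.
move=> h; apply/eqP; rewrite -leqn0 leqNgt -has_count; apply/hasP => [[y ys /eqP ey]].
by move: (allP h y ys); rewrite ey.
Qed.

Lemma ones_nseq n : ones (nseq n 1) = n.
Proof. by rewrite /ones count_nseq eqxx mul1n. Qed.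

Lemma ones_filter (p : pred nat) s : p 1 -> ones [seq x <- s | p x] = ones s.
Proof.
move=> p1; rewrite /ones count_filter; apply: eq_count => x /=.
by case: eqP => // ->; rewrite p1.
Qed.

Lemma all_mem (p : pred nat) s : all p s -> forall x, x \in s -> p x.
Proof. by move/allP. Qed.

Lemma nil_of_all1 b : all (fun x => 0 < x) b -> all (fun x => x <= 0) b -> b = [::].
Proof.
case: b => [//|x b] /= /andP[h1 _] /andP[h2 _]; flia.
Qed.

Lemma PhiA a b : all (fun x => size a < x) a -> all (fun x => x <= (size a).+1) b ->
  is_partition (a ++ b) -> ones b <= size a ->
  [/\ is_partition (Phi (a ++ b)), sumn (Phi (a ++ b)) = sumn (a ++ b),
      T (Phi (a ++ b)) & Psi (Phi (a ++ b)) = a ++ b].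
Proof.
move=> ha hb; rewrite /is_partition all_cat => /andP[sab /andP[pa pb]] ho.
have sa : sorted R a by move: (take_sorted (size a) sab); rewrite take_size_cat.
have sb : sorted R b by move: (drop_sorted (size a) sab); rewrite drop_size_cat.
case: (posnP (size a)) => [/eqP|] va.
  rewrite size_eq0 in va; move/eqP: va => va; subst a.
  have eb : b = [::].
    move: ho; rewrite leqn0 => /eqP hob.
    case: b hb pb hob {sab sb} => [//|x b] /= /andP[h1 _] /andP[h2 _].
    rewrite /ones /=; have -> : x == 1 by apply/eqP; flia. by [].
  by subst b.
set v := size a in ha hb ho va *.
set c := v.+1.
set tc := count (fun x => x == c) b.
set mid := [seq x <- [seq y <- b | y < c] | 1 < x].
have emid : [seq x <- mid | 1 < x] = mid by rewrite /mid filter_id.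
have midg : all (fun x => 1 < x) mid by exact: filter_all.
have midl : all (fun x => x < c) mid.
  by apply/allP => x; rewrite !mem_filter => /and3P[_ -> _].
have smid : sorted R mid by rewrite /mid; apply: (sorted_filter R_trans); exact: (sorted_filter R_trans).
have eb : b = nseq tc c ++ mid ++ nseq (ones b) 1.
  have e1 := top_split sb hb.
  have sf : sorted R [seq y <- b | y < c] by exact: (sorted_filter R_trans).
  have pf : all (fun x => 0 < x) [seq y <- b | y < c] by apply/allP => x; rewrite mem_filter => /andP[_ xb]; exact: (allP pb x xb).
  have e2 := ones_split sf pf.
  have c1 : 1 < c by rewrite /c ltnS.
  rewrite ones_filter in e2; last exact: c1.
  by rewrite {1}e1 {1}e2.
have -> : Phi (a ++ b) = a ++ mid ++ nseq (ones b + c * tc) 1 by rewrite Phi_cat.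
set N := ones b + c * tc.
have hrest : all (fun x => x <= (size a).+1) (mid ++ nseq N 1).
  rewrite all_cat; apply/andP; split; first by apply/allP => x /(allP midl); flia.
  by apply/allP => x /nseqP[-> _].
have onesr : ones (mid ++ nseq N 1) = N by rewrite /ones count_cat count_nseq eqxx mul1n -/(ones mid) ones0.
split.
- rewrite /is_partition !all_cat pa /=.
  apply/andP; split; last first.
    apply/andP; split; first by apply/allP => x /(allP midg) /=; flia.
    by apply/allP => x /nseqP[-> _].
  apply: (srt_piv (m := c)) => //.
  + apply: (srt_piv (m := 1)) => //; first exact: srt_nseq.
    * by move=> y /nseqP[-> _].
    * by move=> x /(allP midg); flia.
  + move=> y; rewrite mem_cat => /orP[/(allP midl)|/nseqP[-> _]]; rewrite /c; flia.
  + by move=> x /(allP ha).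
- rewrite !sumn_cat sumn_nseq [in sumn b]eb !sumn_cat !sumn_nseq /N; flia.
- rewrite T_cat // all_cat; apply/andP; split; first by apply/allP => x /(allP midl).
  by apply/allP => x /nseqP[-> _]; flia.
- rewrite Psi_cat // onesr filter_cat emid filter_nseq /= cats0.
  have -> : N %/ v.+1 = tc by rewrite /N /c addnC mulnC divnMDl // divn_small ?addn0 // ltnS.
  have -> : N %% v.+1 = ones b by rewrite /N /c addnC mulnC modnMDl modn_small // ltnS.
  by rewrite [in RHS]eb.
Qed.

Lemma PsiA a b : all (fun x => size a < x) a -> all (fun x => x <= size a) b ->
  is_partition (a ++ b) ->
  [/\ is_partition (Psi (a ++ b)), sumn (Psi (a ++ b)) = sumn (a ++ b),
      (0 <= crank (Psi (a ++ b)))%R & Phi (Psi (a ++ b)) = a ++ b].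
Proof.
move=> ha hb; rewrite /is_partition all_cat => /andP[sab /andP[pa pb]].
have sa : sorted R a by move: (take_sorted (size a) sab); rewrite take_size_cat.
have sb : sorted R b by move: (drop_sorted (size a) sab); rewrite drop_size_cat.
have hb1 : all (fun x => x <= (size a).+1) b by apply/allP => x /(allP hb) /=; flia.
case: (posnP (size a)) => [/eqP|] va.
  rewrite size_eq0 in va; move/eqP: va => va; subst a.
  have eb : b = [::] by apply: nil_of_all1.
  by subst b.
set v := size a in ha hb hb1 va *.
set c := v.+1.
have c1 : 1 < c by rewrite /c ltnS.
set o := ones b.
set q := o %/ c.
set r := o %% c.
set fb := [seq x <- b | 1 < x].
have fbg : all (fun x => 1 < x) fb by exact: filter_all.
have fbl : all (fun x => x <= v) fb.
  by apply/allP => x; rewrite mem_filter => /andP[_ /(allP hb)].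
have sfb : sorted R fb by exact: (sorted_filter R_trans).
have eb : b = fb ++ nseq o 1 by exact: ones_split.
have rl : r < c by rewrite /r ltn_mod.
have -> : Psi (a ++ b) = a ++ nseq q c ++ fb ++ nseq r 1 by rewrite Psi_cat.
have hrest : all (fun x => x <= (size a).+1) (nseq q c ++ fb ++ nseq r 1).
  rewrite !all_cat; apply/and3P; split.
  - by apply/allP => x /nseqP[-> _].
  - by apply/allP => x /(allP fbl) /=; flia.
  - by apply/allP => x /nseqP[-> _].
have onesr : ones (nseq q c ++ fb ++ nseq r 1) = r.
  rewrite /ones !count_cat !count_nseq eqxx mul1n -/(ones fb) ones0 //.
  by have -> : (c == 1) = false by apply/eqP; flia.
split.
- rewrite /is_partition !all_cat pa /=; apply/andP; split; last first.
    apply/and3P; split.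
    + by apply/allP => x /nseqP[-> _].
    + by apply/allP => x /(allP fbg) /=; flia.
    + by apply/allP => x /nseqP[-> _].
  apply: (srt_piv (m := c)) => //.
  + apply: (srt_piv (m := c)) => //; first exact: srt_nseq.
    * apply: (srt_piv (m := 1)) => //; first exact: srt_nseq.
      -- by move=> y /nseqP[-> _].
      -- by move=> x /(allP fbg) /=; flia.
    * move=> y; rewrite mem_cat => /orP[/(allP fbl)|/nseqP[-> _]] /=; rewrite /c; flia.
    * by move=> x /nseqP[-> _].
  + move=> y; rewrite !mem_cat => /or3P[/nseqP[-> _]|/(allP fbl)|/nseqP[-> _]] //=;
      rewrite /c; flia.
  + by move=> x /(allP ha).
- rewrite !sumn_cat !sumn_nseq [in sumn b]eb sumn_cat sumn_nseq.
  have := divn_eq o c; rewrite -/q -/r => ->; rewrite (mulnC c q) !mul1n; move: (q * c) => z; flia.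
- by rewrite crank_dec // onesr; rewrite /c ltnS in rl.
- rewrite Phi_cat // onesr.
  have -> : [seq y <- nseq q c ++ fb ++ nseq r 1 | y < (size a).+1] = fb ++ nseq r 1.
    rewrite !filter_cat !filter_nseq ltnn /= (_ : 1 < v.+1) // mul1n.
    by congr (_ ++ _); apply/all_filterP; apply/allP => x /(allP fbl) /=; flia.
  have -> : count (fun x => x == (size a).+1) (nseq q c ++ fb ++ nseq r 1) = q.
    rewrite !count_cat !count_nseq eqxx mul1n.
    have -> : count (fun x => x == (size a).+1) fb = 0.
      apply/eqP; rewrite -leqn0 leqNgt -has_count; apply/hasP => [[y yf /eqP ey]].
      by move: (allP fbl y yf); rewrite ey /=; flia.
    have -> : (1 == (size a).+1) = false by rewrite eqSS eq_sym; apply/negbTE; rewrite -lt0n.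
    by rewrite mul0n !addn0.
  rewrite filter_cat filter_nseq /= cats0.
  have -> : [seq x <- fb | 1 < x] = fb by apply/all_filterP.
  have -> : r + (size a).+1 * q = o by rewrite /r /q /c [in RHS](divn_eq o v.+1) mulnC addnC.
  by rewrite [in RHS]eb.
Qed.

Lemma decomp s : is_partition s -> exists a b,
  [/\ s = a ++ b, all (fun x => size a < x) a & all (fun x => x <= (size a).+1) b].
Proof.
move=> /andP[ss _]; have [h1 h2 h3] := D_char ss.
exists (take (D s) s), (drop (D s) s); rewrite cat_take_drop size_takel //.
Qed.

Lemma partA n L : uniq L ->
  (forall s : seq nat, (s \in L) = is_partition s && (psize s == n)) ->
  count (fun s => (0 <= crank s)%R) L = count T L.
Proof.
move=> uL HL; apply: (count_bij2 (f := Phi) (g := Psi)) => //.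
- move=> x; rewrite HL => /andP[px /eqP sx] cx.
  have [a [b [ex ha hb]]] := decomp px; subst x.
  rewrite crank_dec // in cx.
  have [h1 h2 h3 h4] := PhiA ha hb px cx.
  by rewrite HL h1 /psize h2; rewrite /psize in sx; rewrite sx eqxx.
- move=> x; rewrite HL => /andP[px /eqP sx] cx.
  have [a [b [ex ha hb]]] := decomp px; subst x.
  rewrite T_cat // in cx.
  have [h1 h2 h3 h4] := PsiA ha cx px.
  by rewrite HL h1 /psize h2; rewrite /psize in sx; rewrite sx eqxx.
Qed.

Lemma sum_fiber (X Y : eqType) (L : seq X) (P : pred X) (F : X -> nat)
  (f : X -> Y) (M : seq Y) : uniq M -> (forall x, x \in L -> P x -> f x \in M) ->
  \sum_(x <- L | P x) F x = \sum_(y <- M) \sum_(x <- L | P x && (f x == y)) F x.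
Proof.
move=> uM HM.
rewrite -(exchange_big_dep (fun _ => true)) //=.
rewrite [LHS]big_seq_cond [RHS]big_seq_cond; apply: eq_bigr => x /andP[xL px].
rewrite big_const_seq.
have -> : count (fun y => f x == y) M = 1.
  rewrite (@eq_count _ _ (pred1 (f x))); last by move=> y; rewrite /= eq_sym.
  by rewrite count_uniq_mem // HM.
by rewrite /= addn0.
Qed.

Lemma count_fiber (X Y : eqType) (L : seq X) (P : pred X)
  (f : X -> Y) (M : seq Y) : uniq M -> (forall x, x \in L -> P x -> f x \in M) ->
  count P L = \sum_(y <- M) count (fun x => P x && (f x == y)) L.
Proof.
move=> uM HM; rewrite -sum1_count (sum_fiber _ uM HM).
by apply: eq_bigr => y _; rewrite sum1_count.
Qed.

Lemma sum_split (X : eqType) (L : seq X) (P : pred X) (F : X -> nat)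
  (f : X -> nat) N : (forall x, x \in L -> P x -> f x < N) ->
  \sum_(x <- L | P x) F x = \sum_(h <- iota 0 N) \sum_(x <- L | P x && (f x == h)) F x.
Proof.
move=> H; apply: sum_fiber; first exact: iota_uniq.
by move=> x xL px; rewrite mem_iota add0n H.
Qed.

Fixpoint allseq k B : seq (seq nat) :=
  if k is k'.+1 then [seq x :: s | x <- iota 0 B.+1, s <- allseq k' B] else [:: [::]].

Lemma mem_allseq k B s : (s \in allseq k B) = (size s == k) && all (fun x => x <= B) s.
Proof.
elim: k s => [|k IH] s; first by case: s.
change (s \in [seq x :: u | x <- iota 0 B.+1, u <- allseq k B]) with (s \in allseq k.+1 B).
apply/allpairsP/idP.
- move=> [[x t] [hx ht ->]]; rewrite mem_iota add0n ltnS in hx.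
  rewrite /= eqSS; move: ht; rewrite IH /=.
  by rewrite /= in hx; rewrite hx andbC.
- case: s => [//|x t] /=; rewrite eqSS => /and3P[st hx ht].
  exists (x, t); split.
  + by change (0 :: iota 1 B) with (iota 0 B.+1); rewrite mem_iota add0n ltnS.
  + by rewrite IH st.
  + by [].
Qed.

Lemma allseq_uniq k B : uniq (allseq k B).
Proof.
elim: k => [//|k IH].
change (uniq [seq x :: u | x <- iota 0 B.+1, u <- allseq k B]).
apply: allpairs_uniq => //; first exact: iota_uniq.
by move=> [x s] [y t] _ _ /= [-> ->].
Qed.

Definition PL n := undup [seq s <- flatten [seq allseq k n | k <- iota 0 n.+1]
   | is_partition s && (sumn s == n)].

Lemma size_le_sumn s : all (fun x => 0 < x) s -> size s <= sumn s.
Proof. elim: s => [//|x s IH] /= /andP[h1 h2]; have := IH h2; flia. Qed.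

Lemma elem_le_sumn s x : x \in s -> x <= sumn s.
Proof. elim: s => [//|y s IH]; rewrite inE => /orP[/eqP ->|/IH] /=; flia. Qed.

Lemma mem_PL n s : (s \in PL n) = is_partition s && (psize s == n).
Proof.
rewrite /PL mem_undup mem_filter /psize; apply/andP/idP => [[-> _] //|h].
split => //; case/andP: h => /andP[_ ps] /eqP sn.
apply/flattenP; exists (allseq (size s) n).
  by apply/mapP; exists (size s) => //; rewrite mem_iota add0n ltnS -sn; exact: size_le_sumn.
rewrite mem_allseq eqxx /=; apply/allP => x xs; rewrite -sn; exact: elem_le_sumn.
Qed.

Lemma PL_uniq n : uniq (PL n).
Proof. exact: undup_uniq. Qed.

Definition hk (s : seq nat) := (head 0 s + size s).-1.
Definition peel (s : seq nat) := [seq x.-1 | x <- [seq y <- behead s | 1 < y]].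
Definition base (s : seq nat) := maxn 2 (head 0 s).+1.
Definition G h (m : seq nat) e :=
  (base m + e) :: (map S m ++ nseq (h - base m - e - size m) 1).

Lemma sumn_map_pred s : all (fun x => 0 < x) s -> sumn (map predn s) + size s = sumn s.
Proof. elim: s => [//|x s IH] /= /andP[h1 h2]; have := IH h2; flia. Qed.

Lemma sumn_map_S s : sumn (map S s) = sumn s + size s.
Proof. elim: s => [//|x s IH] /=; rewrite IH; flia. Qed.

Lemma sorted_map_pred s : sorted R s -> sorted R (map predn s).
Proof.
move=> ss; rewrite sorted_map; apply: sub_sorted ss => a b /=; flia.
Qed.

Lemma sorted_map_S s : sorted R s -> sorted R (map S s).
Proof. by move=> ss; rewrite sorted_map. Qed.

Lemma map_S_pred s : all (fun x => 0 < x) s -> map S (map predn s) = s.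
Proof. elim: s => [//|x s IH] /= /andP[h1 h2]; rewrite IH //; congr (_ :: _); flia. Qed.

Lemma fwd l h : is_partition l -> T l -> hk l = h -> 0 < h ->
  let m := peel l in
  [/\ is_partition m, sumn m + h = sumn l, T m, hk m + 2 <= h &
      head 0 l - base m < h - hk m - 1 /\ G h m (head 0 l - base m) = l].
Proof.
move=> pl Tl hl h0.
have [a [b [el ha hb]]] := decomp pl.
rewrite el T_cat // in Tl.
case: l el pl hl => [|x t] el pl hl; first by rewrite /hk /= in hl; subst h.
rewrite part_cons in pl; case/and3P: pl => xt pt x0.
case: a ha hb Tl el => [|x' a'] ha hb Tl el.
  by move: el Tl => /= <- /= /andP[]; flia.
case: el => ex et; subst x' t.
move: ha => /= /andP[xa a'a].
set v := (size a').+1 in xa a'a hb Tl.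
have a'pos : all (fun x => 1 < x) a' by apply/allP => y /(allP a'a) /=; flia.
set f := [seq y <- a' ++ b | 1 < y].
have ef : f = a' ++ [seq y <- b | 1 < y].
  by rewrite /f filter_cat; congr (_ ++ _); apply/all_filterP.
have em : peel (x :: (a' ++ b)) = map predn f by [].
rewrite em.
have st : sorted R (a' ++ b) by case/andP: pt.
have pst : all (fun y => 0 < y) (a' ++ b) by case/andP: pt.
have et := ones_split st pst; rewrite -/f in et.
have fg : all (fun y => 1 < y) f by exact: filter_all.
have fpos : all (fun y => 0 < y) f by apply/allP => y /(allP fg) /=; flia.
have sf : sorted R f by exact: (sorted_filter R_trans).
have sizet : size (a' ++ b) = size f + ones (a' ++ b) by rewrite {1}et size_cat size_nseq.
have sumt : sumn (a' ++ b) = sumn f + ones (a' ++ b) by rewrite {1}et sumn_cat sumn_nseq mul1n.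
have hh : h = x + size f + ones (a' ++ b) by rewrite -hl /hk /= sizet; flia.
have fx : forall y, y \in f -> y <= x.
  by move=> y; rewrite mem_filter => /andP[_ /(allP xt)].
split.
- rewrite /is_partition sorted_map_pred //=; apply/allP => y /mapP[z /(allP fg) /= hz ->]; flia.
- rewrite /= sumt -(sumn_map_pred fpos) hh; flia.
- rewrite ef map_cat T_cat size_map.
  + apply/allP => y /mapP[z zb ->]; move: zb; rewrite mem_filter => /andP[_ /(allP Tl)] /=.
    by rewrite /v; flia.
  + by apply/allP => y /mapP[z /(allP a'a) /= hz ->]; rewrite /v in hz; flia.
  + apply/allP => y /mapP[z zb ->]; move: zb; rewrite mem_filter => /andP[_ /(allP Tl)] /=.
    by rewrite /v; flia.
- case: f fg fx hh {ef em et sf fpos sizet sumt} => [|y f'] /= fg fx hh.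
    by rewrite /hk /base /=; move: xa; rewrite /v; flia.
  move: (fx y (mem_head _ _)) fg => yx /andP[y1 _].
  by rewrite /hk /base /= size_map; flia.
split.
- case: f fg fx hh {ef em et sf fpos sizet sumt} => [|y f'] /= fg fx hh.
    by rewrite /hk /base /=; move: xa; rewrite /v; flia.
  move: (fx y (mem_head _ _)) fg => yx /andP[y1 _].
  by rewrite /hk /base /= size_map; flia.
- rewrite /G /= map_S_pred // [in RHS]et size_map.
  case: f fg fx hh {ef em et sf fpos sizet sumt} => [|y f'] /= fg fx hh.
    rewrite /base /=; congr (_ :: _); first by move: xa; rewrite /v; flia.
    congr nseq; move: xa; rewrite /v; flia.
  move: (fx y (mem_head _ _)) fg => yx /andP[y1 _].
  rewrite /base /=; congr (_ :: _); first flia.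
  congr (_ :: _ ++ _); congr nseq; flia.
Qed.

Lemma map_pred_S s : map predn (map S s) = s.
Proof. by elim: s => [//|x s IH] /=; rewrite IH. Qed.

Lemma base_facts m : is_partition m -> 2 <= base m /\ head 0 m < base m.
Proof. rewrite /base; split; flia. Qed.

Lemma key_ineq m h e : is_partition m -> hk m + 2 <= h -> e < h - hk m - 1 ->
  base m + e + size m <= h.
Proof.
case: m => [|y m] /=; first by rewrite /hk /base /=; flia.
rewrite part_cons => /and3P[_ _ y0]; rewrite /hk /base /=; flia.
Qed.

Lemma bwd m h e : is_partition m -> T m -> hk m + 2 <= h -> e < h - hk m - 1 ->
  let l := G h m e in
  [/\ is_partition l, sumn l = sumn m + h, T l, hk l = h &
      peel l = m /\ head 0 l - base m = e].
Proof.
move=> pm Tm hm he l.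
have kf := key_ineq pm hm he.
have [b2 bh] := base_facts pm.
set k := h - base m - e - size m.
have mhead : forall z, z \in m -> z <= head 0 m.
  case: m pm {Tm hm he kf b2 bh l k} => [//|y m] /=; rewrite part_cons => /and3P[hy _ _] z.
  by rewrite inE => /orP[/eqP ->//|/(allP hy)].
have mpos : all (fun x => 0 < x) m by case/andP: pm.
have sm : sorted R m by case/andP: pm.
split.
- rewrite /l /G part_cons; apply/and3P; split; last by flia.
  + rewrite all_cat; apply/andP; split.
    * apply/allP => y /mapP[z zm ->]; have := mhead z zm; flia.
    * by apply/allP => y /nseqP[-> _]; flia.
  + rewrite /is_partition all_cat; apply/andP; split.
    * apply: (srt_piv (m := 1)); first exact: sorted_map_S.
      -- exact: srt_nseq.
      -- by move=> y /nseqP[-> _].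
      -- by move=> y /mapP[z _ ->].
    * apply/andP; split; first by apply/allP => y /mapP[z _ ->].
      by apply/allP => y /nseqP[-> _].
- rewrite /l /G /= sumn_cat sumn_map_S sumn_nseq /k; flia.
- have [a [b [em ha hb]]] := decomp pm.
  rewrite em T_cat // in Tm.
  have -> : l = ((base m + e) :: map S a) ++ (map S b ++ nseq k 1).
    have eqm : map S m = map S a ++ map S b by rewrite em map_cat.
    by rewrite /l /G eqm -catA.
  rewrite T_cat /=.
  + rewrite all_cat; apply/andP; split.
    * by apply/allP => y /mapP[z /(allP Tm) /= hz ->]; rewrite size_map; flia.
    * by apply/allP => y /nseqP[-> _]; rewrite size_map; flia.
  + rewrite size_map; apply/andP; split.
    * case: a em ha {hb Tm} => [|z a] em ha /=; first by flia.
      move: ha => /= /andP[hz _]; move: bh; rewrite em /=; flia.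
    * by apply/allP => y /mapP[z /(allP ha) /= hz ->]; flia.
  + rewrite all_cat size_map; apply/andP; split.
    * by apply/allP => y /mapP[z /(allP hb) /= hz ->]; flia.
    * by apply/allP => y /nseqP[-> _]; flia.
- rewrite /l /G /hk /= size_cat size_map size_nseq /k; flia.
- split; last by rewrite /l /G /=; flia.
  rewrite /l /G /peel /= filter_cat filter_nseq /= cats0.
  have -> : [seq y <- map S m | 1 < y] = map S m.
    by apply/all_filterP; apply/allP => y /mapP[z /(allP mpos) /= hz ->].
  exact: map_pred_S.
Qed.

Lemma Trec n h : 0 < h -> h <= n ->
  count (fun s => T s && (hk s == h)) (PL n) =
  \sum_(m <- PL (n - h) | T m && (hk m + 2 <= h)) (h - hk m - 1).
Proof.
move=> h0 hn.
set Y := [seq m <- PL (n - h) | T m && (hk m + 2 <= h)].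
rewrite (@count_fiber _ _ _ _ peel Y); last 2 first.
- exact: (filter_uniq _ (PL_uniq _)).
- move=> x; rewrite mem_PL => /andP[px /eqP sx] /andP[Tx /eqP hx].
  have [h1 h2 h3 h4 _] := fwd px Tx hx h0.
  rewrite mem_filter h3 h4 mem_PL h1 /psize; rewrite /psize in sx.
  by apply/eqP; flia.
rewrite -[RHS]big_filter -/Y; apply: eq_big_seq => m.
rewrite mem_filter => /andP[/andP[Tm hm] mP]; rewrite mem_PL in mP.
case/andP: mP => pm /eqP sm; rewrite /psize in sm.
rewrite -(size_iota 0 (h - hk m - 1)).
apply: (@count_bij _ _ _ _ _ (fun l => head 0 l - base m) (G h m)).
- exact: PL_uniq.
- exact: iota_uniq.
- move=> x; rewrite mem_PL => /andP[px /eqP sx] /andP[/andP[Tx /eqP hx] /eqP ex].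
  have [_ _ _ _ [h5 h6]] := fwd px Tx hx h0.
  by rewrite ex in h5 h6; rewrite mem_iota add0n h5 h6.
- move=> e; rewrite mem_iota add0n => he.
  have [h1 h2 h3 h4 [h5 h6]] := bwd pm Tm hm he.
  rewrite mem_PL h1 h3 h4 h5 h6 /psize h2 sm eqxx /=.
  split => //; apply/eqP; flia.
Qed.

Lemma sum_bij (X Y : eqType) (L : seq X) (M : seq Y) (P : pred X) (Q : pred Y)
  (F : X -> nat) (W : Y -> nat) (f : X -> Y) (g : Y -> X) :
  uniq L -> uniq M ->
  (forall x, x \in L -> P x -> [/\ f x \in M, Q (f x), g (f x) = x & F x = W (f x)]) ->
  (forall y, y \in M -> Q y -> [/\ g y \in L, P (g y) & f (g y) = y]) ->
  \sum_(x <- L | P x) F x = \sum_(y <- M | Q y) W y.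
Proof.
move=> uL uM Hf Hg.
rewrite -big_filter -[RHS]big_filter.
rewrite (eq_big_seq (fun x => W (f x))); last first.
  by move=> x; rewrite mem_filter => /andP[px xL]; have [_ _ _ ->] := Hf x xL px.
rewrite -(big_map f predT W); apply: perm_big; apply: uniq_perm.
- rewrite map_inj_in_uniq ?filter_uniq // => x y; rewrite !mem_filter.
  move=> /andP[px xL] /andP[py yL] e.
  by have [_ _ <- _] := Hf x xL px; rewrite e; have [_ _ -> _] := Hf y yL py.
- exact: filter_uniq.
- move=> y; rewrite mem_filter; apply/mapP/andP.
  + move=> [x]; rewrite mem_filter => /andP[px xL] ->.
    by have [h1 h2 _ _] := Hf x xL px.
  + move=> [qy yM]; have [h1 h2 h3] := Hg y yM qy.
    by exists (g y); rewrite ?mem_filter ?h1 ?h2 ?h3.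
Qed.

Lemma RR2_cons h t : RR2 (h :: t) = RR2 t && (head 0 t + 2 <= h).
Proof.
case: t => [|y t]; rewrite /RR2 /=; first by rewrite !andbT add0n.
case E: (y + 2 <= h); rewrite /= ?andbF //.
have -> : 1 < h by move: E; flia.
by rewrite andbT.
Qed.

Lemma omega_cons h t : omega22 (h :: t) = (h - head 0 t - 1) * omega22 t.
Proof. by case: t => [|y t] /=; rewrite ?subn0 ?muln1. Qed.

Lemma RR2_part s : RR2 s -> is_partition s.
Proof.
case/andP => ss sa; apply/andP; split.
- by apply: sub_sorted ss => a b /=; flia.
- by apply/allP => x /(allP sa) /=; flia.
Qed.

Lemma Rrec n h : 0 < h -> h <= n ->
  \sum_(s <- PL n | RR2 s && (head 0 s == h)) omega22 s =
  \sum_(t <- PL (n - h) | RR2 t && (head 0 t + 2 <= h)) (h - head 0 t - 1) * omega22 t.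
Proof.
move=> h0 hn.
apply: (@sum_bij _ _ _ _ _ _ _ _ behead (cons h)).
- exact: PL_uniq.
- exact: PL_uniq.
- move=> [|x t]; rewrite mem_PL => /andP[px /eqP sx] /andP[Rx /eqP hx].
    by rewrite /= in hx; flia.
  rewrite /= in hx; subst x; rewrite RR2_cons in Rx; case/andP: Rx => Rt ht.
  rewrite part_cons in px; case/and3P: px => _ pt _.
  split => //; last by rewrite omega_cons.
  + rewrite /= mem_PL pt /psize; rewrite /psize /= in sx; apply/eqP; flia.
  + by rewrite /= Rt ht.
- move=> t; rewrite mem_PL => /andP[pt /eqP st] /andP[Rt ht].
  have Rh : RR2 (h :: t) by rewrite RR2_cons Rt ht.
  split => //.
  + rewrite mem_PL RR2_part //= /psize; rewrite /psize in st; apply/eqP; flia.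
  + by rewrite Rh eqxx.
Qed.

Lemma regroup (L : seq (seq nat)) (P : pred (seq nat)) (f W : seq nat -> nat) h :
  \sum_(x <- L | P x && (f x + 2 <= h)) (h - f x - 1) * W x =
  \sum_(k <- iota 0 h.-1) (h - k - 1) * \sum_(x <- L | P x && (f x == k)) W x.
Proof.
rewrite (@sum_split _ _ _ _ f h.-1); last by move=> x _ /andP[_ hx]; flia.
apply: eq_big_seq => k; rewrite mem_iota add0n => hk'.
rewrite big_distrr /=; apply: eq_big => x.
- by case: eqP => [->|_]; rewrite ?andbF ?andbT //; case: (P x) => //=; flia.
- by move=> /andP[_ /eqP ->].
Qed.

Lemma sum_const_nat (X : Type) (L : seq X) (P : pred X) c :
  \sum_(x <- L | P x) c = c * count P L.
Proof. by rewrite big_const_seq iter_addn_0. Qed.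

Lemma hk_le s : is_partition s -> hk s <= sumn s.
Proof.
case: s => [//|x t]; rewrite part_cons => /and3P[_ /andP[_ pt] _].
rewrite /hk /=; have := size_le_sumn pt; flia.
Qed.

Lemma head_le s : head 0 s <= sumn s.
Proof. case: s => [//|x t] /=; flia. Qed.

Lemma PL0 : PL 0 = [:: [::]].
Proof. by []. Qed.

Lemma claim n h : count (fun s => T s && (hk s == h)) (PL n) =
  \sum_(s <- PL n | RR2 s && (head 0 s == h)) omega22 s.
Proof.
elim/ltn_ind: n h => n IH h.
case: (posnP n) => [->|n0].
  rewrite PL0 /= big_cons big_nil /=.
  by case: h.
case: (posnP h) => [->|h0].
  rewrite big1_seq.
    apply/eqP; rewrite -leqn0 leqNgt -has_count; apply/hasP => [[s]].
    rewrite mem_PL => /andP[ps /eqP ss] /andP[_ /eqP hs].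
    case: s ps ss hs => [|x t]; first by move=> _ /= e; rewrite /psize /= in e; flia.
    rewrite part_cons /hk /= => /and3P[_ _ x0] _; flia.
  move=> s /andP[/andP[_ /eqP hs]]; rewrite mem_PL => /andP[ps /eqP ss].
  case: s ps ss hs => [|x t]; first by move=> _ /= e; rewrite /psize /= in e; flia.
  rewrite part_cons /= => /and3P[_ _ x0] _; flia.
case: (leqP h n) => hn; last first.
  rewrite big1_seq.
    apply/eqP; rewrite -leqn0 leqNgt -has_count; apply/hasP => [[s]].
    rewrite mem_PL => /andP[ps /eqP ss] /andP[_ /eqP hs].
    have := hk_le ps; rewrite /psize in ss; flia.
  move=> s /andP[/andP[_ /eqP hs]]; rewrite mem_PL => /andP[ps /eqP ss].
  have := head_le s; rewrite /psize in ss; flia.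
rewrite Trec // Rrec //.
rewrite (eq_bigr (fun m => (h - hk m - 1) * 1)); last by move=> m _; rewrite muln1.
rewrite regroup regroup; apply: eq_bigr => k _; congr (_ * _).
rewrite sum_const_nat mul1n IH //; flia.
Qed.

Unset Implicit Arguments.
Theorem theorem7 (n : nat) (L : seq (seq nat)) :
  uniq L ->
  (forall s : seq nat, (s \in L) = is_partition s && (psize s == n)) ->
  (\sum_(s <- L | RR2 s) omega22 s)%N =
  count (fun s => (0 <= crank s)%R) L.
Proof.
move=> uL HL.
have pe : perm_eq L (PL n).
  by apply: uniq_perm => //; [exact: PL_uniq | move=> s; rewrite HL mem_PL].
rewrite (perm_big _ pe) (partA uL HL) (permP pe).
rewrite (@sum_split _ _ _ _ (head 0) n.+1); last first.
  move=> x; rewrite mem_PL => /andP[_ /eqP sx] _; have := head_le x.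
  by rewrite /psize in sx; flia.
rewrite (@count_fiber _ _ _ _ hk (iota 0 n.+1)); last 2 first.
- exact: iota_uniq.
- move=> x; rewrite mem_PL => /andP[px /eqP sx] _; have := hk_le px.
  by rewrite mem_iota add0n /psize in sx *; flia.
by apply: eq_bigr => h _; rewrite claim.
Qed.
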